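(* Let $n\ge4$ and $\sigma=(g_1,\dots,g_{n-3},h_1)$. Let $(\mathbf A,\mathbf B,\mathbf C,f_B,f_C)$ be a V-formation in $\mathcal G_n$. Then $(\mathbf A,\mathbf B,\mathbf C,f_B,f_C)$ admits amalgamation in $\mathcal G_n$ if and only if both of the following hold: (a) for each $x\in D^\sigma(\mathbf B)$ there exist $y\in D^\sigma(\mathbf B)$ and $z\in D^\sigma(\mathbf C)$ such that $x\simeq^\sigma_{D^\sigma(\mathbf B)}y$ and $y\circ f_B=z\circ f_C$; (b) for each $x'\in D^\sigma(\mathbf C)$ there exist $y'\in D^\sigma(\mathbf C)$ and $z'\in D^\sigma(\mathbf B)$ such that $x'\simeq^\sigma_{D^\sigma(\mathbf C)}y'$ and $y'\circ f_C=z'\circ f_B$.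
   Context: $\mathbf C_n$ is the Heyting algebra on the chain $\{0<1<\dots<n-1\}$, with min, max, $\bot=0$, $\top=n-1$, $a\to b=\top$ if $a\le b$, $a\to b=b$ if $b<a$. $\mathcal G_n$ is the class of algebras isomorphic to subalgebras of direct powers of $\mathbf C_n$; $\mathcal G_n(\mathbf A,\mathbf C_n)$ is the set of Heyting homomorphisms $\mathbf A\to\mathbf C_n$. $h_1$ is the endomorphism of $\mathbf C_n$ with $h_1(k)=k+1$ for $1\le k<n-1$ and $h_1(k)=k$ for $k\in\{0,n-1\}$. For $1\le i\le n-3$, $g_i$ is the partial map with domain $C_n\setminus\{i\}$ with $g_i(i+1)=i$, $g_i(k)=k$ for $k\notin\{i,i+1\}$. Write $\sigma_i=g_i$ ($i\le n-3$), $\sigma_{n-2}=h_1$. For $\mathbf D\in\mathcal G_n$, $D^\sigma(\mathbf D)$ is $\mathcal G_n(\mathbf D,\mathbf C_n)$ with lifted (partial) operations $\sigma_i^{\mathbf X}(x)=\sigma_i\circ x$, defined iff $\operatorname{ran}x\subseteq\operatorname{dom}\sigma_i$. For $\mathbf X=D^\sigma(\mathbf D)$, $x\simeq^\sigma_{\mathbf X}y$ iff $x=y$ or there is a finite sequence $x=z_0,\dots,z_N=y$ in $X$ such that for each $j<N$ some $i_j\in\{1,\dots,n-3\}$ satisfies $z_{j+1}=\sigma_{i_j}^{\mathbf X}(z_j)$ or $z_j=\sigma_{i_j}^{\mathbf X}(z_{j+1})$. A V-formation in a class $\mathcal A$ is a quintuple $(\mathbf A,\mathbf B,\mathbf C,f_B,f_C)$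 with $\mathbf A,\mathbf B,\mathbf C\in\mathcal A$ and injective homomorphisms $f_B\colon\mathbf A\to\mathbf B$, $f_C\colon\mathbf A\to\mathbf C$. It admits amalgamation if there are $\mathbf E\in\mathcal A$ and embeddings $k_B\colon\mathbf B\to\mathbf E$, $k_C\colon\mathbf C\to\mathbf E$ with $k_B\circ f_B=k_C\circ f_C$. *)

(* Defs.v *)
From mathcomp Require Import all_boot.
From Stdlib Require Import Relations.
Set Implicit Arguments. Unset Strict Implicit. Unset Printing Implicit Defensive.

(* Algebras in the Heyting-algebra signature (meet, join, ->, bot, top).
   No axioms are imposed: membership in G_n (below) forces them. *)
Record HAlg := {
  carrier :> Type;
  hmeet : carrier -> carrier -> carrier;
  hjoin : carrier -> carrier -> carrier;
  himp  : carrier -> carrier -> carrier;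
  hbot  : carrier;
  htop  : carrier }.

Definition is_hom (A B : HAlg) (f : A -> B) : Prop :=
  (forall a b, f (hmeet a b) = hmeet (f a) (f b)) /\
  (forall a b, f (hjoin a b) = hjoin (f a) (f b)) /\
  (forall a b, f (himp a b) = himp (f a) (f b)) /\
  f (hbot A) = hbot B /\ f (htop A) = htop B.

Definition is_embedding (A B : HAlg) (f : A -> B) : Prop :=
  is_hom f /\ injective f.

(* The chain C_n on {0 < 1 < ... < n-1}.  Carrier 'I_(n.-1.+1), which for
   n >= 1 is exactly {0,...,n-1}. *)
Section Chain.
Variable n : nat.
Definition Ct := 'I_(n.-1.+1).
Definition cmeet (a b : Ct) : Ct := if (a <= b)%N then a else b.
Definition cjoin (a b : Ct) : Ct := if (a <= b)%N then b else a.
Definition cimp (a b : Ct) : Ct := if (a <= b)%N then ord_max else b.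
End Chain.

Definition Cn (n : nat) : HAlg :=
  {| carrier := Ct n; hmeet := @cmeet n; hjoin := @cjoin n; himp := @cimp n;
     hbot := ord0; htop := ord_max |}.

Definition Cpow (n : nat) (I : Type) : HAlg :=
  {| carrier := I -> Ct n;
     hmeet := fun f g i => cmeet (f i) (g i);
     hjoin := fun f g i => cjoin (f i) (g i);
     himp  := fun f g i => cimp (f i) (g i);
     hbot  := fun _ => ord0;
     htop  := fun _ => ord_max |}.

Definition in_G (n : nat) (A : HAlg) : Prop :=
  exists (I : Type) (e : A -> Cpow n I), is_embedding e.

(* The maps sigma_i on values (as naturals).
   g_i : partial, domain C_n \ {i}, g_i(i+1) = i, identity elsewhere.
   h_1 : h_1(k) = k+1 for 1 <= k < n-1, fixes 0 and n-1. *)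
Definition g_map (i k : nat) : nat := if k == i.+1 then i else k.
Definition h1_map (n k : nat) : nat :=
  if (1 <= k) && (k < n.-1) then k.+1 else k.

(* sigma_i^X(x) = y, for 1 <= i <= n-3 (the g_i's), on X = D^sigma(D):
   defined iff i is not in the range of x, and then y = g_i o x. *)
Definition sigma_step (n : nat) (D : HAlg) (x y : D -> Cn n) : Prop :=
  is_hom x /\ is_hom y /\
  exists i, (1 <= i <= n - 3)%N /\
    forall a, (nat_of_ord (x a) <> i) /\ nat_of_ord (y a) = g_map i (x a).

Definition sigma_equiv (n : nat) (D : HAlg) : relation (D -> Cn n) :=
  clos_refl_sym_trans _ (@sigma_step n D).

Definition V_formation (n : nat) (A B C : HAlg) (fB : A -> B) (fC : A -> C) : Prop :=
  in_G n A /\ in_G n B /\ in_G n C /\ is_embedding fB /\ is_embedding fC.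

Definition admits_amalgamation (n : nat) (A B C : HAlg) (fB : A -> B) (fC : A -> C) : Prop :=
  exists (E : HAlg) (kB : B -> E) (kC : C -> E),
    in_G n E /\ is_embedding kB /\ is_embedding kC /\
    (forall a, kB (fB a) = kC (fC a)).

(* Main.v *)
Require Import Defs.
From mathcomp Require Import all_boot.
From Stdlib Require Import Relations.
From mathcomp Require Import zify.
From mathcomp Require Import boolp filter.
Set Implicit Arguments. Unset Strict Implicit. Unset Printing Implicit Defensive.

Definition sameord (B : HAlg) (n : nat) (x y : B -> Cn n) :=
  forall a b, ((x a : nat) <= x b) = ((y a : nat) <= y b).

Lemma homE (B : HAlg) n (x : B -> Cn n) : is_hom x ->
  (forall a b, x (hmeet a b) = cmeet (x a) (x b)) /\
  (forall a b, x (hjoin a b) = cjoin (x a) (x b)) /\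
  (forall a b, x (himp a b) = cimp (x a) (x b)) /\
  x (hbot B) = ord0 /\ x (htop B) = ord_max.
Proof. by []. Qed.

Lemma sameord_eq (B : HAlg) n (x y : B -> Cn n) a b :
  sameord x y -> (x a = x b) <-> (y a = y b).
Proof.
move=> H; split=> E.
- apply: val_inj; apply/eqP; rewrite eqn_leq -!H E; by rewrite !leqnn.
- apply: val_inj; apply/eqP; rewrite eqn_leq !H E; by rewrite !leqnn.
Qed.

Lemma sameord_refl (B : HAlg) n (x : B -> Cn n) : sameord x x.
Proof. by []. Qed.
Lemma sameord_sym (B : HAlg) n (x y : B -> Cn n) : sameord x y -> sameord y x.
Proof. by move=> H a b; rewrite H. Qed.
Lemma sameord_trans (B : HAlg) n (x y z : B -> Cn n) :
  sameord x y -> sameord y z -> sameord x z.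
Proof. by move=> H1 H2 a b; rewrite H1 H2. Qed.

Lemma sameord_hom (B : HAlg) n (x y : B -> Cn n) :
  is_hom x -> sameord x y -> y (hbot B) = ord0 -> y (htop B) = ord_max -> is_hom y.
Proof.
move=> /homE [xm [xj [xi [xb xt]]]] S yb yt.
split; [|split; [|split]] => //.
- move=> a b /=; have := xm a b; rewrite /cmeet -S.
  case: ifP => _ E; by apply/(sameord_eq _ _ S).
- move=> a b /=; have := xj a b; rewrite /cjoin -S.
  case: ifP => _ E; by apply/(sameord_eq _ _ S).
- move=> a b /=; have := xi a b; rewrite /cimp -S.
  case: ifP => _ E.
  + rewrite -yt; apply/(sameord_eq _ _ S); by rewrite E xt.
  + by apply/(sameord_eq _ _ S).
Qed.

Lemma step_sameord n (B : HAlg) (x y : B -> Cn n) : sigma_step x y -> sameord x y.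
Proof.
move=> [_ [_ [i [_ H]]]] a b.
have [Ha Ea] := H a; have [Hb Eb] := H b.
rewrite Ea Eb /g_map.
case: eqP; case: eqP; lia.
Qed.

Lemma equiv_sameord n (B : HAlg) (x y : B -> Cn n) : sigma_equiv x y -> sameord x y.
Proof.
elim=> [u v /step_sameord //| u | u v _ H | u v w _ H1 _ H2].
- exact: sameord_refl.
- exact: sameord_sym.
- exact: sameord_trans H1 H2.
Qed.

Lemma hom_comp (A B C : HAlg) (f : A -> B) (g : B -> C) :
  is_hom f -> is_hom g -> is_hom (fun a => g (f a)).
Proof.
move=> [fm [fj [fi [fb ft]]]] [gm [gj [gi [gb gt]]]].
split; [|split; [|split; [|split]]].
- by move=> a b; rewrite fm gm.
- by move=> a b; rewrite fj gj.
- by move=> a b; rewrite fi gi.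
- by rewrite fb gb.
- by rewrite ft gt.
Qed.

Definition gord n i (v : 'I_(n.-1.+1)) : 'I_(n.-1.+1) :=
  if (v : nat) == i.+1 then inord i else v.

Definition rng n (B : HAlg) (x : B -> Cn n) : {set 'I_(n.-1.+1)} :=
  [set v | `[< exists a, x a = v >]].
Definition pot n (B : HAlg) (x : B -> Cn n) := \sum_(v in rng x) (v : nat).

Lemma move_lemma n (B : HAlg) (x : B -> Cn n) i : 4 <= n -> is_hom x ->
  1 <= i -> i <= n - 3 -> (forall a, (x a : nat) <> i) ->
  (exists a0, (x a0 : nat) = i.+1) ->
  exists y : B -> Cn n, is_hom y /\ sigma_step x y /\ pot y < pot x.
Proof.
move=> Hn hx i1 i2 xi [a0 Ha0].
have iK : (inord i : 'I_(n.-1.+1)) = i :> nat by rewrite inordK //; lia.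
have i1K : (inord i.+1 : 'I_(n.-1.+1)) = i.+1 :> nat by rewrite inordK //; lia.
have gE : forall v : 'I_(n.-1.+1), (gord i v : nat) = g_map i v.
  by move=> v; rewrite /gord /g_map; case: eqP.
pose y : B -> Cn n := fun a => gord i (x a).
have [xm [xj [xim [xb xt]]]] := homE hx.
have Sy : sameord x y.
  move=> a b; rewrite /y !gE; have := xi a; have := xi b.
  rewrite /g_map; case: eqP; case: eqP; lia.
have hy : is_hom y.
  apply: (sameord_hom hx Sy).
  - apply: val_inj; rewrite /y /gord xb /=; by [].
  - apply: val_inj; rewrite /y /gord xt /=; case: eqP => // E; lia.
exists y; split => //; split.
  split => //; split => //; exists i; split; first lia.
  by move=> a; split; [apply: xi | rewrite gE].
have Ry : rng y = inord i |: (rng x :\ inord i.+1).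
  apply/setP => v; rewrite !inE; apply/asboolP/idP.
  - move=> [a <-]; rewrite /y /gord; case: (eqVneq (x a : nat) i.+1) => E.
    + by rewrite eqxx.
    + apply/orP; right; apply/andP; split.
      * apply/eqP => E2; move/eqP: E; apply; by rewrite E2.
      * by apply/asboolP; exists a.
  - case/orP => [/eqP -> | /andP [/eqP ne /asboolP [a Ea]]].
    + exists a0; rewrite /y /gord Ha0 eqxx //.
    + exists a; rewrite /y /gord; case: (eqVneq (x a : nat) i.+1) => E //.
      exfalso; apply: ne; apply: val_inj; rewrite /= i1K -E; by rewrite Ea.
have inx : inord i.+1 \in rng x.
  rewrite inE; apply/asboolP; exists a0; apply: val_inj; by rewrite /= i1K.
have notin : inord i \notin rng x :\ inord i.+1.
  rewrite !inE negb_and; apply/orP; right; apply/asboolP => [[a Ea]].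
  apply: (xi a); by rewrite Ea iK.
rewrite /pot Ry big_setU1 //= (big_setD1 _ inx) /= iK i1K.
by rewrite ltn_add2r.
Qed.

Definition compressed n (B : HAlg) (x : B -> Cn n) :=
  forall a (u : nat), 1 <= u -> u <= x a -> x a <= n - 2 ->
    exists a', (x a' : nat) = u.

Lemma gap (P : nat -> Prop) u w : ~ P u -> P w -> u <= w ->
  exists i, u <= i < w /\ ~ P i /\ P i.+1.
Proof.
elim: w => [|w IH] nPu Pw uw.
- have u0 : u = 0 by lia.
  by subst.
- case: (pselect (P w)) => Pw'.
  + have uw' : u <= w.
      case: (leqP u w) => // h; have : u = w.+1 by lia.
      by move=> E; subst.
    have [i [h1 [h2 h3]]] := IH nPu Pw' uw'.
    exists i; split => //; lia.
  + have uw' : u <= w.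
      case: (leqP u w) => // h; have : u = w.+1 by lia.
      by move=> E; subst.
    exists w; split => //; lia.
Qed.

Lemma claim1 n (B : HAlg) (x : B -> Cn n) : 4 <= n -> is_hom x ->
  exists x', is_hom x' /\ compressed x' /\ sigma_equiv x x'.
Proof.
move=> Hn.
suff: forall k (x : B -> Cn n), pot x <= k -> is_hom x ->
  exists x', is_hom x' /\ compressed x' /\ sigma_equiv x x' by apply => //.
elim=> [|k IH] {}x hk hx.
all: case: (pselect (compressed x)) => Hc;
  first by exists x; split => //; split => //; apply: rst_refl.
all: have [a [u [u1 [u2 [u3 nu]]]]] :
  exists a (u : nat), 1 <= u /\ u <= x a /\ x a <= n - 2 /\
    ~ exists a', (x a' : nat) = u
  by apply: contrapT => H'; apply: Hc => a u h1 h2 h3; apply: contrapT => H'';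
     apply: H'; exists a, u.
all: have [i [/andP [i1 i2] [ni Pi]]] :=
  gap (P := fun v => exists a', (x a' : nat) = v) nu (ex_intro _ a erefl) u2.
all: have [y [hy [sxy lt]]] : exists y : B -> Cn n, is_hom y /\ sigma_step x y /\ pot y < pot x
  by apply: (move_lemma (i:=i) Hn hx); [lia | lia | move=> a' E; apply: ni; exists a' | exact: Pi].
- lia.
- have [x' [hx' [cx' e']]] := IH y ltac:(lia) hy.
  exists x'; split => //; split => //.
  apply: rst_trans e'; exact: rst_step.
Qed.

Lemma claim2 n (B : HAlg) (x y : B -> Cn n) : 4 <= n -> is_hom x -> is_hom y ->
  compressed x -> compressed y -> sameord x y -> x = y.
Proof.
move=> Hn hx hy cx cy S.
have half : forall (x y : B -> Cn n), is_hom x -> is_hom y ->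
  compressed x -> compressed y -> sameord x y -> forall v,
  (forall w, w < v -> forall a, ((x a : nat) = w -> (y a : nat) = w) /\
                                ((y a : nat) = w -> (x a : nat) = w)) ->
  forall a, (x a : nat) = v -> (y a : nat) = v.
  move=> {cx cy S hx hy}x {}y hx hy cx cy S v IH a xa.
  have [xm [xj [xim [xb xt]]]] := homE hx.
  have [ym [yj [yim [yb yt]]]] := homE hy.
  have ya := ltn_ord (y a); have xa' := ltn_ord (x a).
  case: (ltnP 0 v) => v0; last first.
    have : (y a : nat) <= y (hbot B) by rewrite -S xb /=; lia.
    rewrite yb /=; lia.
  case: (ltnP v (n - 1)) => vt; last first.
    have : (y (htop B) : nat) <= y a by rewrite -S xt /=; lia.
    rewrite yt /=; lia.
  have [a' xa'v] : exists a', (x a' : nat) = v.-1.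
    case: (ltnP 1 v) => v1.
    - apply: (cx a v.-1); lia.
    - exists (hbot B); rewrite xb /=; lia.
  have ya'v : (y a' : nat) = v.-1 by apply: (proj1 (IH _ _ a')); lia.
  have lo : v <= y a.
    have : ~~ ((x a : nat) <= x a') by lia.
    rewrite S; lia.
  case: (leqP (y a) v) => hi; first lia.
  have ynt : (y a : nat) <= n - 2.
    case: (leqP (y a) (n - 2)) => // h.
    have : (y (htop B) : nat) <= y a by rewrite yt /=; lia.
    rewrite -S xt /=; lia.
  have [a'' ya''] := cy a v ltac:(lia) ltac:(lia) ynt.
  have : ~~ ((y a : nat) <= y a'') by lia.
  rewrite -S => h.
  have := proj1 (IH (x a'') ltac:(lia) a'') erefl; lia.
have key : forall v, forall w, w < v -> forall a,
  ((x a : nat) = w -> (y a : nat) = w) /\ ((y a : nat) = w -> (x a : nat) = w).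
  elim=> [|v IH] w wv a; first lia.
  have IH' : forall w', w' < w -> forall a,
    ((x a : nat) = w' -> (y a : nat) = w') /\ ((y a : nat) = w' -> (x a : nat) = w').
    move=> w' h; apply: IH; lia.
  split.
  - exact: (half x y hx hy cx cy S w IH' a).
  - apply: (half y x hy hx cy cx (sameord_sym S) w) => w' h a''.
    by have [h1 h2] := IH' w' h a''; split.
apply: functional_extensionality_dep => a; apply: val_inj.
have [h _] := key (x a).+1 (x a) (ltnSn _) a; apply: esym; exact: h.
Qed.

Lemma lemmaA n (B : HAlg) (x y : B -> Cn n) : 4 <= n -> is_hom x -> is_hom y ->
  sameord x y -> sigma_equiv x y.
Proof.
move=> Hn hx hy S.
have [x' [hx' [cx ex]]] := claim1 Hn hx.
have [y' [hy' [cy ey]]] := claim1 Hn hy.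
have E : x' = y'.
  apply: claim2 => //.
  apply: sameord_trans (equiv_sameord ey).
  apply: sameord_trans S.
  exact: sameord_sym (equiv_sameord ex).
subst; apply: rst_trans ex _; exact: rst_sym.
Qed.

Definition psi n (S : nat) (v : 'I_(n.-1.+1)) : 'I_(n.-1.+1) :=
  if (0 < S) && (S <= v) then ord_max else v.

Lemma psi_meet n S u v : psi S (@cmeet n u v) = cmeet (psi S u) (psi S v).
Proof.
apply: val_inj; rewrite /psi /cmeet.
have := ltn_ord u; have := ltn_ord v.
case: (leqP u v) => h1; case: (leqP S u) => h2; case: (leqP S v) => h3;
  case: (ltnP 0 S) => h4 /=; rewrite ?h1 ?h2 ?h3 ?h4 /=; try lia;
  repeat (case: ifP => /=); lia.
Qed.

Lemma psi_join n S u v : psi S (@cjoin n u v) = cjoin (psi S u) (psi S v).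
Proof.
apply: val_inj; rewrite /psi /cjoin.
have := ltn_ord u; have := ltn_ord v.
case: (leqP u v) => h1; case: (leqP S u) => h2; case: (leqP S v) => h3;
  case: (ltnP 0 S) => h4 /=; rewrite ?h1 ?h2 ?h3 ?h4 /=; try lia;
  repeat (case: ifP => /=); lia.
Qed.

Lemma psi_imp n S u v : psi S (@cimp n u v) = cimp (psi S u) (psi S v).
Proof.
apply: val_inj; rewrite /psi /cimp.
have := ltn_ord u; have := ltn_ord v.
case: (leqP u v) => h1; case: (leqP S u) => h2; case: (leqP S v) => h3;
  case: (ltnP 0 S) => h4 /=; rewrite ?h1 ?h2 ?h3 ?h4 /=; try lia;
  repeat (case: ifP => /=); lia.
Qed.

Definition nu n (J : Type) (k : J * 'I_(n.-1.+1)) (f : Cpow n J) : Cn n :=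
  psi k.2 (f k.1).

Lemma nu_hom n J k : is_hom (@nu n J k).
Proof.
split; [|split; [|split; [|split]]] => /=.
- by move=> f g; rewrite /nu /= psi_meet.
- by move=> f g; rewrite /nu /= psi_join.
- by move=> f g; rewrite /nu /= psi_imp.
- apply: val_inj; rewrite /nu /psi /=; by case: ifP => //= /andP [h1 h2]; lia.
- apply: val_inj; rewrite /nu /psi /=; by case: ifP.
Qed.

Fixpoint allP T (P : T -> Prop) (s : seq T) : Prop :=
  match s with [::] => True | p :: s' => P p /\ allP P s' end.

Lemma allP_cat T (P : T -> Prop) s1 s2 : allP P (s1 ++ s2) <-> allP P s1 /\ allP P s2.
Proof. elim: s1 => [|p s IH] /=; [tauto | rewrite IH; tauto]. Qed.

Definition cf n (B : HAlg) (x : B -> Cn n) (s : seq (B * B)) : B :=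
  foldr (fun p acc => if (x p.1 : nat) <= x p.2 then hmeet (himp p.1 p.2) acc else acc)
    (htop B) s.
Definition df n (B : HAlg) (x : B -> Cn n) (s : seq (B * B)) : B :=
  foldr (fun p acc => if (x p.1 : nat) <= x p.2 then acc else hjoin (himp p.1 p.2) acc)
    (hbot B) s.

Lemma cf_top n (B : HAlg) (x : B -> Cn n) s : is_hom x -> (x (cf x s) : nat) = n.-1.
Proof.
move=> /homE [xm [xj [xi [xb xt]]]].
elim: s => [|p s IH] /=; first by rewrite xt.
case: ifP => h //; rewrite xm xi /cmeet /cimp h /= IH; case: ifP => //; lia.
Qed.

Lemma df_lt n (B : HAlg) (x : B -> Cn n) s : 2 <= n -> is_hom x -> (x (df x s) : nat) < n.-1.
Proof.
move=> Hn /homE [xm [xj [xi [xb xt]]]].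
elim: s => [|p s IH] /=; first by rewrite xb /=; lia.
case: ifP => h //; rewrite xj xi /cjoin /cimp h.
have := ltn_ord (x p.1); case: ifP => /= _; lia.
Qed.

Lemma fin_good n (B : HAlg) (x mu : B -> Cn n) s : is_hom mu ->
  (mu (cf x s) : nat) = n.-1 -> (mu (df x s) : nat) < n.-1 ->
  allP (fun p => ((x p.1 : nat) <= x p.2) = ((mu p.1 : nat) <= mu p.2)) s.
Proof.
move=> /homE [mm [mj [mi [mb mt]]]].
elim: s => [|p s IH] //= hc hd.
case: ifP hc hd => h hc hd.
- move: hc; rewrite mm mi /cmeet /cimp.
  have := ltn_ord (mu p.1); have := ltn_ord (mu p.2); have := ltn_ord (mu (cf x s)).
  case: (leqP (mu p.1) (mu p.2)) => h1 /=.
  + case: ifP => h2 h3 h4 h5 e; split => //; apply: IH => //; lia.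
  + case: ifP => h2 h3 h4 h5 e; lia.
- move: hd; rewrite mj mi /cjoin /cimp.
  have := ltn_ord (mu p.1); have := ltn_ord (mu p.2); have := ltn_ord (mu (df x s)).
  case: (leqP (mu p.1) (mu p.2)) => h1 /=.
  + case: ifP => h2 h3 h4 h5 e.
    * by have := leq_ltn_trans h2 e; rewrite ltnn.
    * by rewrite ltnn in e.
  + case: ifP => h2 h3 h4 h5 e; split => //; apply: IH => //.
    apply: ltn_trans e; by rewrite ltnNge h2.
Qed.

Lemma fin_lemma n (B : HAlg) (J : Type) (m : B -> Cpow n J) (x : B -> Cn n) s :
  4 <= n -> is_embedding m -> is_hom x ->
  exists k : J * 'I_(n.-1.+1),
    allP (fun p => ((x p.1 : nat) <= x p.2) =
                   ((nu k (m p.1) : nat) <= nu k (m p.2))) s.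
Proof.
move=> Hn [hm im] hx.
have [mm [mj [mi [mb mt]]]] := hm.
have [xm [xj [xi [xb xt]]]] := homE hx.
set c := cf x s; set d := df x s.
have xc : (x c : nat) = n.-1 by apply: cf_top.
have xd : (x d : nat) < n.-1 by apply: df_lt => //; lia.
have neq1 : m (himp c d) <> m (htop B).
  move=> /im E; have := xi c d; rewrite E xt /cimp => /(congr1 val) /=.
  case: ifP => h /= e; [move: h; rewrite xc; have := ltn_ord (x d); lia | move: xd; rewrite -e ltnn] => //.
have [j hj] : exists j, m (himp c d) j <> m (htop B) j.
  apply: contrapT => H; apply: neq1; apply: functional_extensionality_dep => j.
  by apply: contrapT => H'; apply: H; exists j.
move: hj; rewrite mi mt /= /cimp.
case: ifP => h1 // _.
have h2 : (m d j : nat) < m c j by rewrite ltnNge h1.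
exists (j, m c j).
have hmu : is_hom (fun b => nu (j, m c j) (m b)) by apply: hom_comp => //; apply: nu_hom.
apply: (fin_good (mu := fun b => nu (j, m c j) (m b))) => //.
- rewrite /nu /psi /=; case: ifP => //=; rewrite leqnn andbT; lia.
- rewrite /nu /psi /=; case: ifP => /=.
  + by move=> /andP [_ h]; have := leq_ltn_trans h h2; rewrite ltnn.
  + move=> _; apply: leq_trans h2 _; rewrite -ltnS; exact: ltn_ord.
Qed.

Lemma key n (B : HAlg) (J : Type) (m : B -> Cpow n J) (x : B -> Cn n) :
  4 <= n -> is_embedding m -> is_hom x ->
  exists W : Cpow n J -> Cn n, is_hom W /\ sameord x (fun b => W (m b)).
Proof.
move=> Hn em hx.
pose K := (J * 'I_(n.-1.+1))%type.
pose good := fun (p : B * B) (k : K) => ((x p.1 : nat) <= x p.2) =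
                   ((nu k (m p.1) : nat) <= nu k (m p.2)).
pose F : classical_sets.set_system K :=
  fun A => exists s, forall k, allP (fun p => good p k) s -> A k.
have FF : ProperFilter F.
  apply: Build_ProperFilter.
  - move=> [s H]; have [k hk] := fin_lemma s Hn em hx; exact: (H k hk).
  - apply: Build_Filter.
    + by exists [::].
    + move=> A C [s1 H1] [s2 H2]; exists (s1 ++ s2) => k /allP_cat [h1 h2].
      split; [exact: H1 | exact: H2].
    + move=> P Q PQ [s H]; exists s => k hk; apply: PQ; exact: H.
have [G [UG FG]] := ultraFilterLemma FF.
have Gne : forall A, G A -> exists k, A k.
  move=> A GA; apply: contrapT => H; apply: (filter_not_empty G).
  apply: filterS GA => k Ak; apply: H; by exists k.
have Gval : forall f : Cpow n J, exists c : 'I_(n.-1.+1), G (fun k => nu k f = c).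
  move=> f; apply: contrapT => H.
  have H' : forall c, G (fun k => nu k f <> c).
    move=> c; case: (in_ultra_setVsetC (fun k => nu k f = c) UG) => // h.
    exfalso; apply: H; by exists c.
  have : forall t, t <= n.-1.+1 -> G (fun k => t <= nu k f).
    elim=> [|t IH] ht.
    - by apply: filterS filterT => k _.
    - have ht' : t < n.-1.+1 by lia.
      apply: filterS (filterI (IH (ltnW ht)) (H' (Ordinal ht'))) => k [h1 h2].
      rewrite ltn_neqAle h1 andbT; apply/eqP => E; apply: h2; apply: val_inj; by rewrite /= E.
  move=> /(_ n.-1.+1 (leqnn _)) /Gne [k hk].
  by have := ltn_ord (nu k f); rewrite ltnNge hk.
pose W f := proj1_sig (cid (Gval f)).
have Wspec : forall f, G (fun k => nu k f = W f) by move=> f; exact: (proj2_sig (cid (Gval f))).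
have G3 : forall A1 A2 A3, G A1 -> G A2 -> G A3 -> exists k, A1 k /\ A2 k /\ A3 k.
  move=> A1 A2 A3 h1 h2 h3.
  have [k [a1 [a2 a3]]] := Gne _ (filterI h1 (filterI h2 h3)).
  by exists k.
exists W; split.
- split; [|split; [|split; [|split]]].
  + move=> f g; have [k [e1 [e2 e3]]] := G3 _ _ _ (Wspec (hmeet f g)) (Wspec f) (Wspec g).
    rewrite -e1 -e2 -e3; have [nm _] := nu_hom k; exact: nm.
  + move=> f g; have [k [e1 [e2 e3]]] := G3 _ _ _ (Wspec (hjoin f g)) (Wspec f) (Wspec g).
    rewrite -e1 -e2 -e3; have [_ [nj _]] := nu_hom k; exact: nj.
  + move=> f g; have [k [e1 [e2 e3]]] := G3 _ _ _ (Wspec (himp f g)) (Wspec f) (Wspec g).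
    rewrite -e1 -e2 -e3; have [_ [_ [ni _]]] := nu_hom k; exact: ni.
  + have [k hk] := Gne _ (Wspec (hbot _)); rewrite -hk.
    have [_ [_ [_ [nb _]]]] := nu_hom k; exact: nb.
  + have [k hk] := Gne _ (Wspec (htop _)); rewrite -hk.
    have [_ [_ [_ [_ nt]]]] := nu_hom k; exact: nt.
- move=> a b.
  have Gg : G (good (a, b)) by apply: FG; exists [:: (a, b)] => k [h _].
  have [k [g1 [e1 e2]]] := G3 _ _ _ Gg (Wspec (m a)) (Wspec (m b)).
  by rewrite g1 /= e1 e2.
Qed.

Lemma separate n (B : HAlg) : in_G n B -> forall b b' : B, b <> b' ->
  exists x : B -> Cn n, is_hom x /\ x b <> x b'.
Proof.
move=> [I [e [[em [ej [ei [eb et]]]] ie]]] b b' ne.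
have [j hj] : exists j, e b j <> e b' j.
  apply: contrapT => H; apply: ne; apply: ie; apply: functional_extensionality_dep => j.
  by apply: contrapT => H'; apply: H; exists j.
exists (fun a => e a j); split => //.
split; [|split; [|split; [|split]]].
- by move=> a c; rewrite em.
- by move=> a c; rewrite ej.
- by move=> a c; rewrite ei.
- by rewrite eb.
- by rewrite et.
Qed.

Lemma emb_comp (A B C : HAlg) (f : A -> B) (g : B -> C) :
  is_embedding f -> is_embedding g -> is_embedding (fun a => g (f a)).
Proof.
move=> [hf if_] [hg ig]; split; first exact: hom_comp.
by move=> a b /ig /if_.
Qed.

Lemma proj_hom n (I : Type) (B : HAlg)
  (pr : I -> B -> Cn n) (hp : forall i, is_hom (pr i)) :
  is_hom (fun (b : B) => ((fun i : I => pr i b) : Cpow n I)).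
Proof.
split; [|split; [|split; [|split]]] => /=.
- move=> a b; apply: functional_extensionality_dep => i; have [h _] := hp i; exact: h.
- move=> a b; apply: functional_extensionality_dep => i; have [_ [h _]] := hp i; exact: h.
- move=> a b; apply: functional_extensionality_dep => i; have [_ [_ [h _]]] := hp i; exact: h.
- apply: functional_extensionality_dep => i; have [_ [_ [_ [h _]]]] := hp i; exact: h.
- apply: functional_extensionality_dep => i; have [_ [_ [_ [_ h]]]] := hp i; exact: h.
Qed.

Theorem theorem6p4 (n : nat) (Hn : (4 <= n)%N) (A B C : HAlg)
    (fB : A -> B) (fC : A -> C) :
  V_formation n fB fC ->
  (admits_amalgamation n fB fC <->
   ((forall x : B -> Cn n, is_hom x ->
       exists (y : B -> Cn n) (z : C -> Cn n),
         is_hom y /\ is_hom z /\ sigma_equiv x y /\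
         (forall a, y (fB a) = z (fC a))) /\
    (forall x' : C -> Cn n, is_hom x' ->
       exists (y' : C -> Cn n) (z' : B -> Cn n),
         is_hom y' /\ is_hom z' /\ sigma_equiv x' y' /\
         (forall a, y' (fC a) = z' (fB a))))).
Proof.
move=> [GA [GB [GC [eB eC]]]]; split.
- move=> [E [kB [kC [[I [e ee]] [ekB [ekC comm]]]]]].
  have [he _] := ee; have [hkB _] := ekB; have [hkC _] := ekC.
  split.
  + move=> x hx.
    have [W [hW S]] := key Hn (emb_comp ekB ee) hx.
    exists (fun b => W (e (kB b))), (fun c => W (e (kC c))).
    have hy : is_hom (fun b => W (e (kB b))) by do 2 apply: hom_comp => //.
    split => //; split; first by do 2 apply: hom_comp => //.
    split; first exact: lemmaA.
    by move=> a; rewrite comm.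
  + move=> x hx.
    have [W [hW S]] := key Hn (emb_comp ekC ee) hx.
    exists (fun c => W (e (kC c))), (fun b => W (e (kB b))).
    have hy : is_hom (fun c => W (e (kC c))) by do 2 apply: hom_comp => //.
    split => //; split; first by do 2 apply: hom_comp => //.
    split; first exact: lemmaA.
    by move=> a; rewrite comm.
- move=> [Ha Hb].
  pose I := {p : (B -> Cn n) * (C -> Cn n) |
              is_hom p.1 /\ is_hom p.2 /\ forall a, p.1 (fB a) = p.2 (fC a)}.
  exists (Cpow n I), (fun b (i : I) => (sval i).1 b), (fun c (i : I) => (sval i).2 c).
  split; [|split; [|split]].
  + exists I, (fun f => f); split; last by move=> f g.
    by split; [|split; [|split; [|split]]].
  + split.
    * apply: (proj_hom (pr := fun (i : I) b => (sval i).1 b)) => i.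
      exact: (proj1 (proj2_sig i)).
    * move=> b b' E; apply: contrapT => ne.
      have [x [hx xne]] := separate GB ne.
      have [y [z [hy [hz [eq c]]]]] := Ha x hx.
      apply: xne; apply/(sameord_eq _ _ (equiv_sameord eq)).
      exact: (congr1 (fun f => f (exist _ (y, z) (conj hy (conj hz c)))) E).
  + split.
    * apply: (proj_hom (pr := fun (i : I) c => (sval i).2 c)) => i.
      exact: (proj1 (proj2 (proj2_sig i))).
    * move=> b b' E; apply: contrapT => ne.
      have [x [hx xne]] := separate GC ne.
      have [y [z [hy [hz [eq c]]]]] := Hb x hx.
      apply: xne; apply/(sameord_eq _ _ (equiv_sameord eq)).
      exact: (congr1 (fun f => f (exist _ (z, y) (conj hz (conj hy (fun a => esym (c a)))))) E).
  + move=> a; apply: functional_extensionality_dep => i.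
    exact: (proj2 (proj2 (proj2_sig i)) a).
Qed.
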